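(* Let $G$ be a discrete group, $\mathfrak g$ a finite string of elements of $G$, $\mathcal E$ a finite partition of $G$, $\ell=|Con(\mathfrak g,\mathcal E)|$, and let $(B-A)X=0$ be a subsystem of $Eq(\mathfrak g,\mathcal E)$ consisting of $p$ equations $A_tX=B_tX$ ($A,B$ the $p\times\ell$ $(0,1)$-matrices with rows $A_t,B_t$). Suppose that $\sum_{t=1}^p(B_t-A_t)=(1,1,\dots,1)$ and that there is a $p\times p$ permutation matrix $P$, corresponding to a permutation $\pi$ of $\{1,\dots,p\}$ (so that row $i$ of $PM$ is row $\pi(i)$ of $M$), such that the first $p-1$ rows of $PB-P^+A$ have nonnegative entries. Then $\tau(G)\le 1+|A_{\pi(1)}|+\ell$, where $|A_{\pi(1)}|$ denotes the number of entries equal to $1$ in the row $A_{\pi(1)}$.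
   Context: Configurations: for $\mathfrak g=(g_1,\dots,g_n)$ and a partition $\mathcal E=\{E_1,\dots,E_m\}$ of $G$, a configuration is $C=(c_0,\dots,c_n)\in\{1,\dots,m\}^{n+1}$ such that some $x\in G$ has $x\in E_{c_0}$ and $g_ix\in E_{c_i}$ ($1\le i\le n$); $Con(\mathfrak g,\mathcal E)=\{C_1,\dots,C_\ell\}$ is the set of configurations. The configuration equations $Eq(\mathfrak g,\mathcal E)$: variables $f_C$, equations $\sum_{C:\,c_j=i}f_C=\sum_{C:\,c_k=i}f_C$ for $1\le i\le m$, $0\le j,k\le n$, each written $aX=bX$ with $X=(f_{C_1},\dots,f_{C_\ell})^t$ and $a,b\in\{0,1\}^\ell$ the indicator vectors of the configurations on each side. A subsystem is a finite list (repetitions allowed, sides may be interchanged) of such equations. For a permutation matrix $P$ with rows $P_1,\dots,P_p$, $P^+$ denotes the matrix with rows $P_2,\dots,P_p,P_1$. Tarski number: a complete paradoxical decomposition of $G$ is a partition $\{A_1,\dots,A_r,B_1,\dots,B_s\}$ of $G$ with elements $a_i,b_j\in G$ such that $\{a_iA_i\}$ and $\{b_jB_j\}$ are each partitions of $G$; $\tau(G)$ is the minimum of $r+s$ over all such ($\infty$ if none). *)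

(* Defs.v *)
From HB Require Import structures.
From mathcomp Require Import all_boot all_order all_algebra all_fingroup.
Set Implicit Arguments. Unset Strict Implicit. Unset Printing Implicit Defensive.
Import GRing.Theory Num.Theory.

Definition is_group (G : Type) (mul : G -> G -> G) (one : G) (inv : G -> G)
  : Prop :=
  [/\ forall x y z, mul x (mul y z) = mul (mul x y) z,
      forall x, mul one x = x &
      forall x, mul (inv x) x = one].

(* The point (x, g_1 x, ..., g_n x), indexed by 'I_n.+1 (index 0 is x). *)
Definition orbit_pt (G : Type) (mul : G -> G -> G) (n : nat)
  (g : 'I_n -> G) (x : G) (j : 'I_n.+1) : G :=
  match unlift ord0 j with
  | None => x
  | Some i => mul (g i) x
  end.

(* C = (c_0,...,c_n) is a configuration of (g, E), where the partition
   E = {E_1..E_m} is given by the block-index map E : G -> 'I_m. *)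
Definition is_config (G : Type) (mul : G -> G -> G) (n m : nat)
  (g : 'I_n -> G) (E : G -> 'I_m) (C : {ffun 'I_n.+1 -> 'I_m}) : Prop :=
  exists x : G, forall j, E (orbit_pt mul g x j) = C j.

(* Indicator vector (over the enumeration Cs = (C_1..C_l) of Con(g,E))
   of the configurations C with c_j = i. *)
Definition ind_row (n m l : nat) (Cs : 'I_l -> {ffun 'I_n.+1 -> 'I_m})
  (j : 'I_n.+1) (i : 'I_m) : 'I_l -> int :=
  fun k => ((Cs k j == i)%:R)%R.

(* Complete paradoxical decomposition with r + s <= N, i.e. tau(G) <= N.
   The partition {A_1..A_r, B_1..B_s} of G is given by the label map D. *)
Definition tarski_le (G : Type) (mul : G -> G -> G) (N : nat) : Prop :=
  exists (r s : nat) (D : G -> 'I_r + 'I_s) (a : 'I_r -> G) (b : 'I_s -> G),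
    [/\ (r + s <= N)%N,
        (forall y : G, exists! i : 'I_r, exists x, D x = inl i /\ mul (a i) x = y) &
        (forall y : G, exists! j : 'I_s, exists x, D x = inr j /\ mul (b j) x = y)].

(* Main.v *)
Require Import Defs.
From HB Require Import structures.
From mathcomp Require Import all_boot all_order all_algebra all_fingroup zify.
From Stdlib Require Import ClassicalEpsilon.
Import GRing.Theory Num.Theory.
Set Implicit Arguments. Unset Strict Implicit. Unset Printing Implicit Defensive.

Lemma grp_rinv (G : Type) (mul : G -> G -> G) (one : G) (inv : G -> G) :
  is_group mul one inv -> forall x, mul x (inv x) = one.
Proof.
case=> As L1 Li x.
set y := inv x.
have e1 : mul x y = mul (mul (inv y) y) (mul x y) by rewrite Li L1.
by rewrite e1 -As (As y x y) Li L1 Li.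
Qed.

Lemma tarski_fin (G : Type) (mul : G -> G -> G) (N : nat) (Ir Is : finType)
  (D : G -> Ir + Is) (a : Ir -> G) (b : Is -> G) :
  (#|Ir| + #|Is| <= N)%N ->
  (forall y, exists! i, exists x, D x = inl i /\ mul (a i) x = y) ->
  (forall y, exists! j, exists x, D x = inr j /\ mul (b j) x = y) ->
  tarski_le mul N.
Proof.
move=> HN Ha Hb.
exists #|Ir|, #|Is|, (fun x => match D x with inl i => inl (enum_rank i)
                                   | inr j => inr (enum_rank j) end),
  (fun i => a (enum_val i)), (fun j => b (enum_val j)); split => // y.
- have [i [[x [Dx ax]] U]] := Ha y.
  exists (enum_rank i); split.
    by exists x; rewrite Dx enum_rankK.
  move=> i' [x' []]; case E: (D x') => [i1|] // [<-].
  rewrite enum_rankK => ax'.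
  by rewrite (U i1) //; exists x'.
- have [i [[x [Dx ax]] U]] := Hb y.
  exists (enum_rank i); split.
    by exists x; rewrite Dx enum_rankK.
  move=> i' [x' []]; case E: (D x') => [|i1] // [<-].
  rewrite enum_rankK => ax'.
  by rewrite (U i1) //; exists x'.
Qed.
Fixpoint kkF (G : Type) (mul : G -> G -> G) (one : G) (hN : nat -> G) (i : nat) : G :=
  if i is i'.+1 then mul (hN i') (kkF mul one hN i') else one.

Lemma abstract_main (G : Type) (mul : G -> G -> G) (one : G) (inv : G -> G)
  (HG : is_group mul one inv)
  (l P : nat) (f : G -> 'I_l) (aN bN : nat -> 'I_l -> bool) (hN : nat -> G)
  (Hh : forall i x, (i < P)%N -> aN i (f x) = bN i (f (mul (hN i) x)))
  (Hchain : forall i c, (i.+1 < P)%N -> aN i.+1 c -> bN i c)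
  (HaP : forall c, aN P c = false)
  (Hcount : forall c, #|[set i : 'I_P | bN i c && ~~ aN i.+1 c]| = (aN 0 c).+1) :
  tarski_le mul (1 + #|[set c | aN 0 c]| + l).
Proof.
have Rinv := grp_rinv HG; case: HG => As L1 Li.
pose Dp i c := bN i c && ~~ aN i.+1 c.
pose kk := kkF mul one hN.
pose xs x i := mul (kk i) x.
have xsS x i : xs x i.+1 = mul (hN i) (xs x i) by rewrite /xs /= As.
have xs0 x : xs x 0 = x by rewrite /xs /= L1.
pose q x j := ~~ aN j.+1 (f (xs x j.+1)).
pose stop x := find (q x) (iota 0 P).
have Ppos (x : G) : (0 < P)%N.
  have := max_card [set i : 'I_P | Dp i (f x)]; rewrite card_ord.
  rewrite /Dp Hcount; exact: leq_trans.
have stopP x : [/\ (stop x < P)%N, q x (stop x) & forall j, (j < stop x)%N -> ~~ q x j].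
  have hq : has (q x) (iota 0 P).
    apply/hasP; exists P.-1; first by rewrite mem_iota add0n prednK ?leqnn ?Ppos.
    by rewrite /q prednK ?HaP ?(Ppos x).
  have := hq; rewrite has_find size_iota => Hs; split => //.
    by have := nth_find 0 hq; rewrite nth_iota // add0n.
  move=> j Hj; have := before_find 0 Hj; rewrite nth_iota ?add0n => [->//|].
  exact: ltn_trans Hj Hs.
have stop_uniq x i : (i < P)%N -> q x i -> (forall j, (j < i)%N -> ~~ q x j) -> stop x = i.
  move=> iP qi hj; have [sP qs hs] := stopP x.
  case: (ltngtP (stop x) i) => // H.
    by have := hj _ H; rewrite qs.
  by have := hs _ H; rewrite qi.
have forward x : aN 0 (f x) -> Dp (stop x) (f (xs x (stop x).+1)).
  move=> ax; have [sP qs hs] := stopP x.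
  rewrite /Dp; apply/andP; split; last exact: qs.
  rewrite xsS -Hh //.
  move: sP hs; case: (stop x) => [|s] sP hs; first by rewrite xs0.
  by have := hs s (ltnSn s); rewrite /q negbK.
have back y i : (i < P)%N -> Dp i (f y) ->
    let x := mul (inv (kk i.+1)) y in [/\ aN 0 (f x), stop x = i & xs x i.+1 = y].
  move=> iP Dy x.
  have xy : xs x i.+1 = y by rewrite /xs /x As Rinv L1.
  have alld d : (d <= i)%N -> aN (i - d) (f (xs x (i - d))).
    elim: d => [|d IH] hd.
      rewrite subn0 (Hh _ _ iP) -xsS xy.
      by case/andP: Dy.
    have := IH (ltnW hd); rewrite -(subnSK hd) => H.
    rewrite (Hh _ _ (leq_ltn_trans (leq_subr _ _) iP)) -xsS.
    apply: Hchain H; rewrite (subnSK hd); exact: leq_ltn_trans (leq_subr _ _) iP.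
  have allj j : (j <= i)%N -> aN j (f (xs x j)).
    move=> ji; have := alld (i - j) (leq_subr _ _); by rewrite subKn.
  split => //.
  - by have := allj 0 (leq0n _); rewrite xs0.
  - apply: stop_uniq => //.
      by rewrite /q xy; case/andP: Dy.
    by move=> j ji; rewrite /q negbK; apply: allj.
pose first c : nat := if [pick i : 'I_P | Dp i c] is Some i then val i else 0.
have firstP c : (first c < P)%N /\ Dp (first c) c.
  rewrite /first; case: pickP => [k Dk|H]; first by split; [exact: ltn_ord|].
  have := Hcount c; rewrite (_ : [set _ | _] = set0) ?cards0 //.
  by apply/setP => k; rewrite inE in_set0; have := H k.
have twoA c i : (i < P)%N -> Dp i c -> i <> first c -> aN 0 c.
  move=> iP Di nf; have [fP Df] := firstP c.
  have sub : [set Ordinal iP; Ordinal fP] \subset [set i : 'I_P | Dp i c].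
    apply/subsetP => j; rewrite !inE => /orP[] /eqP -> //.
  have := subset_leq_card sub.
  rewrite cards2 Hcount.
  have -> : (Ordinal iP != Ordinal fP) by apply/eqP => -[].
  by case: (aN 0 c).
have two c i j : (i < P)%N -> (j < P)%N -> Dp i c -> Dp j c ->
    i <> first c -> j <> first c -> i = j.
  move=> iP jP Di Dj ni nj; apply/eqP/negPn/negP => nij.
  have [fP Df] := firstP c.
  have sub : Ordinal iP |: [set Ordinal jP; Ordinal fP] \subset [set i : 'I_P | Dp i c].
    apply/subsetP => k; rewrite !inE => /orP[|/orP[]] /eqP -> //.
  have := subset_leq_card sub.
  rewrite cardsU1 cards2 Hcount !inE.
  have -> : (Ordinal jP != Ordinal fP) by apply/eqP => -[].
  have -> : (Ordinal iP == Ordinal jP) = false by apply/eqP => -[] e; rewrite e eqxx in nij.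
  have -> : (Ordinal iP == Ordinal fP) = false by apply/eqP => -[].
  by case: (aN 0 c).
pose second c : nat :=
  if [pick i : 'I_P | Dp i c && (val i != first c)] is Some i then val i else 0.
have secondP c : aN 0 c -> [/\ (second c < P)%N, Dp (second c) c & second c <> first c].
  move=> ac; rewrite /second; case: pickP => [k /andP[Dk /eqP nf]|H].
    by split => //; exact: ltn_ord.
  have [fP Df] := firstP c.
  have sub : [set i : 'I_P | Dp i c] \subset [set Ordinal fP].
    apply/subsetP => k; rewrite !inE => Dk; have := H k; rewrite /= Dk /= => /negbFE/eqP kf.
    by apply/eqP/val_inj.
  have := subset_leq_card sub.
  by rewrite Hcount cards1 ac ltnn.
pose cx x := f (xs x (stop x).+1).
pose T := {c : 'I_l | aN 0 c}.
pose D x : 'I_l + option T :=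
  if aN 0 (f x) then (if stop x == first (cx x) then inl (cx x) else inr (insub (cx x)))
  else inr None.
pose a c := kk (first c).+1.
pose b (o : option T) := if o is Some c then kk (second (val c)).+1 else one.
have fwd2 x : aN 0 (f x) -> (stop x < P)%N /\ Dp (stop x) (cx x).
  move=> ax; split; [by case: (stopP x)|exact: forward].
apply: (tarski_fin (D:=D) (a:=a) (b:=b)).
- rewrite card_ord card_option card_sig.
  have -> : #|[pred x | aN 0 x]| = #|[set c | aN 0 c]| by rewrite cardsE.
  lia.
- move=> y; exists (f y); split.
    have [fP Df] := firstP (f y).
    have [ax st xy] := back y _ fP Df.
    exists (mul (inv (kk (first (f y)).+1)) y); split; last first.
      by rewrite /a -/(xs _ _) xy.
    by rewrite /D ax /cx st xy eqxx.
  move=> c [x []]; rewrite /D; case ax: (aN 0 (f x)) => //.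
  case: eqP => // e [<-]; rewrite /a -e -/(xs _ _) => <-.
  by [].
- move=> y; case ay: (aN 0 (f y)).
  + have [sP Ds sf] := secondP _ ay.
    exists (Some (Sub (f y) ay)); split.
      have [ax st xy] := back y _ sP Ds.
      exists (mul (inv (kk (second (f y)).+1)) y); split; last first.
        by rewrite /b /= -/(xs _ _) xy.
      rewrite /D ax /cx st xy.
      by case: eqP => // _; rewrite insubT.
    move=> o [x []]; rewrite /D; case ax: (aN 0 (f x)); last first.
      by move=> [<-] /=; rewrite L1 => e; rewrite e ay in ax.
    case: eqP => // ne [].
    have [sxP Dsx] := fwd2 x ax.
    have acx := twoA _ _ sxP Dsx ne.
    rewrite insubT => <- /=.
    have [sP' Ds' sf'] := secondP _ acx.
    rewrite -(two _ _ _ sxP sP' Dsx Ds' ne sf') -/(xs _ _) => e.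
    by congr Some; apply: val_inj; rewrite /= /cx e.
  + exists None; split.
      by exists y; rewrite /D ay L1.
    move=> o [x []]; rewrite /D; case ax: (aN 0 (f x)); last by case.
    case: eqP => // ne [].
    have [sxP Dsx] := fwd2 x ax.
    have acx := twoA _ _ sxP Dsx ne.
    rewrite insubT => <- /=.
    have [sP' Ds' sf'] := secondP _ acx.
    rewrite -(two _ _ _ sxP sP' Dsx Ds' ne sf') -/(xs _ _) => e.
    by exfalso; move: acx; rewrite /cx e ay.
Qed.

Theorem theorem4p5
  (G : Type) (mul : G -> G -> G) (one : G) (inv : G -> G)
  (HG : is_group mul one inv)
  (n : nat) (g : 'I_n -> G)
  (m : nat) (E : G -> 'I_m) (HE : forall i : 'I_m, exists x, E x = i)
  (l : nat) (Cs : 'I_l -> {ffun 'I_n.+1 -> 'I_m})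
  (HCs_inj : injective Cs)
  (HCs : forall C, is_config mul g E C <-> exists k, Cs k = C)
  (p : nat) (A B : 'M[int]_(p, l))
  (Hsub : forall t : 'I_p, exists (i : 'I_m) (j k : 'I_n.+1),
      forall c : 'I_l, A t c = ind_row Cs j i c /\ B t c = ind_row Cs k i c)
  (Hsum : forall c : 'I_l, (\sum_(t < p) (B t c - A t c) = 1)%R)
  (pi : 'S_p)
  (Hperm : forall (i : 'I_p) (h : (i.+1 < p)%N) (c : 'I_l),
      (0 <= B (pi i) c - A (pi (Ordinal h)) c)%R) :
  forall i0 : 'I_p, nat_of_ord i0 = 0%N ->
    tarski_le mul (1 + #|[set c | A (pi i0) c == 1%R]| + l).
Proof.
move=> i0 Hi0.
have Rinv := grp_rinv HG; have [As L1 Li] := HG.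
have Hf x : exists k, Cs k = [ffun j => E (orbit_pt mul g x j)].
  by apply/HCs; exists x => j; rewrite ffunE.
pose f x := proj1_sig (constructive_indefinite_description _ (Hf x)).
have fP x : Cs (f x) = [ffun j => E (orbit_pt mul g x j)] :=
  proj2_sig (constructive_indefinite_description _ (Hf x)).
have Hq t : exists q : 'I_m * 'I_n.+1 * 'I_n.+1, forall c,
    A t c = ind_row Cs q.1.2 q.1.1 c /\ B t c = ind_row Cs q.2 q.1.1 c.
  by have [i [j [k H]]] := Hsub t; exists (i, j, k).
pose qf t := proj1_sig (constructive_indefinite_description _ (Hq t)).
have qP t c : A t c = ind_row Cs (qf t).1.2 (qf t).1.1 c /\
              B t c = ind_row Cs (qf t).2 (qf t).1.1 c :=
  proj2_sig (constructive_indefinite_description _ (Hq t)) c.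
have A01 t c : A t c = ((A t c == 1%R) : nat)%:R%R.
  by rewrite (qP t c).1 /ind_row; case: (_ == _).
have B01 t c : B t c = ((B t c == 1%R) : nat)%:R%R.
  by rewrite (qP t c).2 /ind_row; case: (_ == _).
pose ge (j : 'I_n.+1) := if unlift ord0 j is Some i then g i else one.
have orbE x j : orbit_pt mul g x j = mul (ge j) x.
  by rewrite /orbit_pt /ge; case: unlift.
pose ht t := mul (inv (ge (qf t).2)) (ge (qf t).1.2).
have Hht t x : A t (f x) = B t (f (mul (ht t) x)).
  rewrite (qP t _).1 (qP t _).2 /ind_row !fP !ffunE !orbE.
  have -> : mul (ge (qf t).2) (mul (ht t) x) = mul (ge (qf t).1.2) x.
    by rewrite /ht As As Rinv L1.
  by [].
pose oi (i : nat) : option 'I_p := insub i.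
have oiK (t : 'I_p) : oi t = Some t := valK t.
have oiF i : (p <= i)%N -> oi i = None.
  by move=> H; rewrite /oi insubF // ltnNge H.
have oiS i : (i < p)%N -> exists t : 'I_p, oi i = Some t /\ val t = i.
  by move=> ip; exists (Ordinal ip); rewrite -(oiK (Ordinal ip)).
pose aN i c := if oi i is Some t then A (pi t) c == 1%R else false.
pose bN i c := if oi i is Some t then B (pi t) c == 1%R else false.
pose hN i := if oi i is Some t then ht (pi t) else one.
have Hh i x : (i < p)%N -> aN i (f x) = bN i (f (mul (hN i) x)).
  move=> ip; case: (oiS i ip) => t [e _]; rewrite /aN /bN /hN e.
  by rewrite Hht.
have aNlt j c : aN j c -> (j < p)%N.
  by rewrite /aN; case: ltnP => // H; rewrite oiF.
have Hchain i c : (i.+1 < p)%N -> aN i.+1 c -> bN i c.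
  move=> ip; case: (oiS i.+1 ip) => t1 [e1 v1]; case: (oiS i (ltnW ip)) => t [e v].
  rewrite /aN /bN e1 e => /eqP a1.
  have h : ((val t).+1 < p)%N by rewrite v.
  have := Hperm t h c.
  have -> : Ordinal h = t1 by apply: val_inj; rewrite /= v v1.
  by rewrite a1 (B01 (pi t) c) subr_ge0; case: (_ == _).
have HaP c : aN p c = false by rewrite /aN oiF.
have e0 : oi 0 = Some i0 by rewrite -Hi0 oiK.
have -> : [set c | A (pi i0) c == 1%R] = [set c | aN 0 c].
  by apply/setP => c; rewrite !inE /aN e0.
apply: (@abstract_main G mul one inv HG l p f aN bN hN Hh Hchain HaP).
move=> c.
have S1 : (\sum_(i < p) (((bN i c) : nat)%:R - ((aN i c) : nat)%:R) = 1 :> int)%R.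
  apply: etrans (Hsum c); rewrite [RHS](reindex_inj (@perm_inj _ pi)); apply: eq_bigr => i _.
  by rewrite /aN /bN oiK -A01 -B01.
pose F i := (((aN i c) : nat)%:R : int)%R.
have e1 := big_nat_recr p 0 (op := +%R) (idx := 0%R) F (leq0n p).
have e2 := big_nat_recl p 0 (op := +%R) (idx := 0%R) F (leq0n p).
rewrite e2 /F HaP /= addr0 in e1.
rewrite !big_mkord in e1.
have S3 : (\sum_(i < p) (((bN i c && ~~ aN i.+1 c) : nat)%:R : int) =
    \sum_(i < p) ((bN i c) : nat)%:R - \sum_(i < p) ((aN i.+1 c) : nat)%:R)%R.
  rewrite -sumrB; apply: eq_bigr => i _.
  case ha: (aN i.+1 c).
    by rewrite (Hchain _ _ (aNlt _ _ ha) ha).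
  by rewrite andbT subr0.
have S4 : (\sum_(i < p) (((bN i c && ~~ aN i.+1 c) : nat)%:R : int) =
    #|[set i : 'I_p | bN i c && ~~ aN i.+1 c]|%:R)%R.
  rewrite -sumr_const [RHS]big_mkcond /=; apply: eq_bigr => i _; rewrite inE.
  by case: (_ && _).
rewrite sumrB in S1.
apply/eqP; rewrite -(eqr_nat int) -nat1r -S4 S3; apply/eqP.
move: S1 e1; rewrite /F.
set s1 := (\sum_(i < p) _)%R; set s2 := (\sum_(i < p) _)%R; set s3 := (\sum_(i < p) _)%R.
lia.
Qed.
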